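(* Let $\alpha=[0;a_1,a_2,\ldots]\in\mathbf{Bad}$ and let $(p_n/q_n)_{n\ge1}$ be the sequence of its convergents. Assume that there exist a positive rational number $x$ and a sequence of finite words $(U_k)_{k\ge1}$ over the positive integers such that, for every $k\ge1$, the sequence of partial quotients $a_1a_2\ldots$ of $\alpha$ begins with the word $U_kU_k^x$, and $|U_{k+1}|>|U_k|$. Set $M=\limsup_{\ell\to+\infty}q_\ell^{1/\ell}$ and $m=\liminf_{\ell\to+\infty}q_\ell^{1/\ell}$. If $$x\ge1\quad\text{or}\quad x>\frac12\cdot\frac{\log M}{\log m},$$ then for every real number $\beta$ equal to $\alpha$ up to a rational homography one has $\inf_{q\ge1}q\cdot\Vert q\alpha\Vert\cdot\Vert q\beta\Vert=0$.
   Context: For a real number $y$, $\Vert y\Vert$ denotes the distance from $y$ to the nearest integer. $\mathbf{Bad}=\{\alpha\in\mathbb{R} : \inf_{q\ge1} q\Vert q\alpha\Vert>0\}$ (equivalently, real numbers with bounded partial quotients). A finite word $W=w_1\ldots w_r$ over the positive integers is identified with the sequence of partial quotients $w_1,\ldots,w_r$; $|W|$ denotes its length. For a positive rational $x$, $W^x$ denotes the word $W^{[x]}W'$, where $W^{[x]}$ is the concatenation of $[x]$ copies of $W$ and $W'$ is the prefix of $W$ of length $\lceil (x-[x])|W|\rceil$. A real number $\beta$ is equal to $\alpha$ up to a rational homography if $\beta=(a\alpha+b)/(c\alpha+d)$ for some integers $a,b,c,d$ with $ad-bc\neq0$. *)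

(* Defs.v *)
From Stdlib Require Import Reals List QArith Qround ZArith.
From Coquelicot Require Import Coquelicot.
Open Scope R_scope.

Definition dnint (y : R) : R :=
  let f := y - IZR (Int_part y) in Rmin f (1 - f).

(* Partial quotients are given as a : nat -> nat with  a k = a_(k+1),
   i.e. a 0 = a_1, a 1 = a_2, ... *)

(* denominators and numerators of convergents:
   qpair a n = (q_n, q_(n+1)), with q_0 = 1, q_1 = a_1,
   q_(n+2) = a_(n+2) q_(n+1) + q_n;  similarly p_0 = 0, p_1 = 1. *)
Fixpoint qpair (a : nat -> nat) (n : nat) : nat * nat :=
  match n with
  | O => (1%nat, a O)
  | S k => let (x, y) := qpair a k in (y, (a (S k) * y + x)%nat)
  end.
Fixpoint ppair (a : nat -> nat) (n : nat) : nat * nat :=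
  match n with
  | O => (0%nat, 1%nat)
  | S k => let (x, y) := ppair a k in (y, (a (S k) * y + x)%nat)
  end.
Definition conv_q (a : nat -> nat) (n : nat) : nat := fst (qpair a n).
Definition conv_p (a : nat -> nat) (n : nat) : nat := fst (ppair a n).

Definition is_cf_expansion (alpha : R) (a : nat -> nat) : Prop :=
  (forall k, (1 <= a k)%nat) /\
  is_lim_seq (fun n => INR (conv_p a n) / INR (conv_q a n)) alpha.

Definition Bad (alpha : R) : Prop :=
  exists c, 0 < c /\ forall q : nat, (1 <= q)%nat -> c <= INR q * dnint (INR q * alpha).

(* Word power W^x = W^[x] W' with W' the prefix of W of length
   ceil((x - [x]) |W|). *)
Definition word_pow (W : list nat) (x : Q) : list nat :=
  concat (repeat W (Z.to_nat (Qfloor x))) ++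
  firstn (Z.to_nat (Qceiling ((x - inject_Z (Qfloor x)) * inject_Z (Z.of_nat (length W))))) W.

Definition begins_with (a : nat -> nat) (W : list nat) : Prop :=
  forall i, (i < length W)%nat -> a i = nth i W 0%nat.

Definition homography_equiv (alpha beta : R) : Prop :=
  exists a b c d : Z, (a * d - b * c <> 0)%Z /\
    beta = (IZR a * alpha + IZR b) / (IZR c * alpha + IZR d).

(* Main.v *)
Require Import Defs.
From Stdlib Require Import Reals List QArith Qround ZArith Qreals Lia Lra Psatz Classical.
From Coquelicot Require Import Coquelicot.
Open Scope R_scope.


Open Scope R_scope.

Section CF.
Variable a : nat -> nat.

Lemma qpair_snd n : snd (qpair a n) = conv_q a (S n).
Proof. unfold conv_q; simpl. destruct (qpair a n); reflexivity. Qed.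
Lemma ppair_snd n : snd (ppair a n) = conv_p a (S n).
Proof. unfold conv_p; simpl. destruct (ppair a n); reflexivity. Qed.

Lemma cq0 : conv_q a 0 = 1%nat. Proof. reflexivity. Qed.
Lemma cq1 : conv_q a 1 = a 0. Proof. reflexivity. Qed.
Lemma cp0 : conv_p a 0 = 0%nat. Proof. reflexivity. Qed.
Lemma cp1 : conv_p a 1 = 1%nat. Proof. reflexivity. Qed.
Lemma cqSS n : conv_q a (S (S n)) = (a (S n) * conv_q a (S n) + conv_q a n)%nat.
Proof.
  rewrite <- !qpair_snd. unfold conv_q. simpl. destruct (qpair a n); reflexivity.
Qed.
Lemma cpSS n : conv_p a (S (S n)) = (a (S n) * conv_p a (S n) + conv_p a n)%nat.
Proof.
  rewrite <- !ppair_snd. unfold conv_p. simpl. destruct (ppair a n); reflexivity.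
Qed.
End CF.


Open Scope R_scope.

Section CF2.
Variable a : nat -> nat.
Hypothesis Ha : forall k, (1 <= a k)%nat.

Lemma cq_basic n :
  (1 <= conv_q a n /\ conv_q a n <= conv_q a (S n) /\ conv_p a n <= conv_q a n
   /\ n <= conv_q a n)%nat /\
  (1 <= conv_q a (S n) /\ conv_p a (S n) <= conv_q a (S n) /\ S n <= conv_q a (S n))%nat.
Proof.
  induction n as [|n IH].
  - rewrite cq0, cq1, cp0, cp1. pose proof (Ha 0). lia.
  - destruct IH as [[H1 [H2 [H3 H4]]] [H5 [H6 H7]]].
    rewrite cqSS, cpSS. pose proof (Ha (S n)).
    repeat split; try lia; nia.
Qed.

Lemma cq_pos n : (1 <= conv_q a n)%nat. Proof. apply (cq_basic n). Qed.
Lemma cq_mono n : (conv_q a n <= conv_q a (S n))%nat. Proof. apply (cq_basic n). Qed.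
Lemma cp_le_cq n : (conv_p a n <= conv_q a n)%nat. Proof. apply (cq_basic n). Qed.
Lemma cq_ge_n n : (n <= conv_q a n)%nat. Proof. apply (cq_basic n). Qed.
Lemma cq_mono_le m n : (m <= n)%nat -> (conv_q a m <= conv_q a n)%nat.
Proof. induction 1; [lia|]. pose proof (cq_mono m0); lia. Qed.
Lemma cq_ge2 n : (2 * conv_q a n <= conv_q a (S (S n)))%nat.
Proof. rewrite cqSS. pose proof (Ha (S n)). pose proof (cq_mono n). nia. Qed.

Lemma cdet n : INR (conv_p a (S n)) * INR (conv_q a n) - INR (conv_p a n) * INR (conv_q a (S n)) = (-1)^n.
Proof.
  induction n as [|n IH].
  - rewrite cq0, cq1, cp0, cp1. simpl. ring.
  - rewrite cqSS, cpSS, !plus_INR, !mult_INR. simpl pow. rewrite <- IH. ring.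
Qed.
End CF2.


Open Scope R_scope.

Definition btw (u v z : R) := (u <= z <= v) \/ (v <= z <= u).

Lemma mediant_btw p0 q0 p1 q1 A : 0 < q0 -> 0 < q1 -> 0 <= A ->
  btw (p0/q0) (p1/q1) ((A*p1+p0)/(A*q1+q0)).
Proof.
  intros H0 H1 HA.
  assert (Hq2 : 0 < A*q1+q0) by nra.
  assert (E1 : (A*p1+p0)/(A*q1+q0) - p0/q0 = A*(p1*q0-p0*q1)/(q0*(A*q1+q0))) by (field; lra).
  assert (E2 : p1/q1 - (A*p1+p0)/(A*q1+q0) = (p1*q0-p0*q1)/(q1*(A*q1+q0))) by (field; lra).
  unfold btw.
  destruct (Rle_dec 0 (p1*q0-p0*q1)) as [Hd|Hd].
  - left. split.
    + assert (0 <= A*(p1*q0-p0*q1)/(q0*(A*q1+q0))).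
      { apply Rmult_le_pos; [nra|]. left; apply Rinv_0_lt_compat; nra. }
      lra.
    + assert (0 <= (p1*q0-p0*q1)/(q1*(A*q1+q0))).
      { apply Rmult_le_pos; [nra|]. left; apply Rinv_0_lt_compat; nra. }
      lra.
  - right. split.
    + assert ((p1*q0-p0*q1)/(q1*(A*q1+q0)) <= 0).
      { unfold Rdiv. apply Rmult_le_0_r; [lra|]. left; apply Rinv_0_lt_compat; nra. }
      lra.
    + assert (A*(p1*q0-p0*q1)/(q0*(A*q1+q0)) <= 0).
      { unfold Rdiv. apply Rmult_le_0_r; [nra|]. left; apply Rinv_0_lt_compat; nra. }
      lra.
Qed.

Lemma btw_trans u v w z : btw u v w -> btw v w z -> btw u v z.
Proof. unfold btw; intros; lra. Qed.

Section CF3.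
Variable a : nat -> nat.
Hypothesis Ha : forall k, (1 <= a k)%nat.
Definition xc n := INR (conv_p a n) / INR (conv_q a n).

Lemma INR_cq_pos n : 0 < INR (conv_q a n).
Proof. apply lt_0_INR. pose proof (cq_pos a Ha n). lia. Qed.

Lemma xc_med n : btw (xc n) (xc (S n)) (xc (S (S n))).
Proof.
  unfold xc. rewrite cqSS, cpSS, !plus_INR, !mult_INR.
  apply mediant_btw; try apply INR_cq_pos; apply pos_INR.
Qed.

Lemma xc_nest k : forall n, btw (xc n) (xc (S n)) (xc (n + k)).
Proof.
  induction k as [|k IH]; intros n.
  - rewrite Nat.add_0_r. unfold btw; lra.
  - replace (n + S k)%nat with (S n + k)%nat by lia.
    eapply btw_trans; [apply xc_med|]. apply IH.
Qed.

Variable alpha : R.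
Hypothesis Hlim : is_lim_seq xc alpha.

Lemma alpha_btw n : btw (xc n) (xc (S n)) alpha.
Proof.
  assert (Hev : forall m, (n <= m)%nat -> btw (xc n) (xc (S n)) (xc m)).
  { intros m Hm. replace m with (n + (m - n))%nat by lia. apply xc_nest. }
  destruct (Rle_dec (xc n) (xc (S n))) as [H|H].
  - left. split.
    + assert (Hl := is_lim_seq_le_loc (fun _ => xc n) xc (xc n) alpha).
      simpl in Hl. apply Hl; [|apply is_lim_seq_const|exact Hlim].
      exists n. intros m Hm. destruct (Hev m Hm); lra.
    + assert (Hl := is_lim_seq_le_loc xc (fun _ => xc (S n)) alpha (xc (S n))).
      simpl in Hl. apply Hl; [|exact Hlim|apply is_lim_seq_const].
      exists n. intros m Hm. destruct (Hev m Hm); lra.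
  - right. split.
    + assert (Hl := is_lim_seq_le_loc (fun _ => xc (S n)) xc (xc (S n)) alpha).
      simpl in Hl. apply Hl; [|apply is_lim_seq_const|exact Hlim].
      exists n. intros m Hm. destruct (Hev m Hm); lra.
    + assert (Hl := is_lim_seq_le_loc xc (fun _ => xc n) alpha (xc n)).
      simpl in Hl. apply Hl; [|exact Hlim|apply is_lim_seq_const].
      exists n. intros m Hm. destruct (Hev m Hm); lra.
Qed.

Lemma alpha_01 : 0 <= alpha <= 1.
Proof.
  destruct (alpha_btw 0) as [H|H]; unfold xc in H; rewrite cq0, cq1, cp0, cp1 in H;
  simpl INR in H; unfold Rdiv in H; rewrite Rmult_0_l in H;
  assert (0 < / INR (a 0) <= 1) by
    (pose proof (Ha 0); assert (1 <= INR (a 0)) by (apply (le_INR 1); lia);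
     split; [apply Rinv_0_lt_compat; lra| rewrite <- Rinv_1; apply Rinv_le_contravar; lra]);
  lra.
Qed.

Lemma approx_x n : Rabs (alpha - xc n) <= / (INR (conv_q a n) * INR (conv_q a (S n))).
Proof.
  pose proof (alpha_btw n) as Hb.
  assert (E : xc (S n) - xc n = (-1)^n / (INR (conv_q a n) * INR (conv_q a (S n)))).
  { rewrite <- (cdet a n). unfold xc. pose proof (INR_cq_pos n). pose proof (INR_cq_pos (S n)).
    field; lra. }
  assert (Ha1 : Rabs (xc (S n) - xc n) = / (INR (conv_q a n) * INR (conv_q a (S n)))).
  { rewrite E. unfold Rdiv. rewrite Rabs_mult, pow_1_abs, Rmult_1_l.
    apply Rabs_right. left. apply Rinv_0_lt_compat. pose proof (INR_cq_pos n). pose proof (INR_cq_pos (S n)). nra. }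
  rewrite <- Ha1. unfold btw in Hb. destruct Hb; unfold Rabs; repeat destruct Rcase_abs; lra.
Qed.

Lemma approx n : Rabs (INR (conv_q a n) * alpha - INR (conv_p a n)) <= / INR (conv_q a (S n)).
Proof.
  pose proof (approx_x n). pose proof (INR_cq_pos n). pose proof (INR_cq_pos (S n)).
  replace (INR (conv_q a n) * alpha - INR (conv_p a n)) with (INR (conv_q a n) * (alpha - xc n))
    by (unfold xc; field; lra).
  rewrite Rabs_mult, Rabs_right by lra.
  apply Rmult_le_reg_l with (/ INR (conv_q a n)); [apply Rinv_0_lt_compat; lra|].
  rewrite <- Rmult_assoc, Rinv_l, Rmult_1_l by lra.
  rewrite Rinv_mult in H. exact H.
Qed.
End CF3.


Open Scope nat_scope.

Lemma cf_shift (a : nat -> nat) (R n : nat) :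
  (forall j, j <= n -> a (S R + j) = a j) ->
  conv_q a (S R + n) = conv_q a R * conv_p a n + conv_q a (S R) * conv_q a n /\
  conv_q a (S (S R) + n) = conv_q a R * conv_p a (S n) + conv_q a (S R) * conv_q a (S n) /\
  conv_p a (S R + n) = conv_p a R * conv_p a n + conv_p a (S R) * conv_q a n /\
  conv_p a (S (S R) + n) = conv_p a R * conv_p a (S n) + conv_p a (S R) * conv_q a (S n).
Proof.
  induction n as [|n IH]; intros Hj.
  - rewrite !Nat.add_0_r, cp0, cq0, cp1, cq1, cqSS, cpSS.
    assert (a (S R) = a 0) by (rewrite <- (Hj 0) by lia; f_equal; lia).
    rewrite H. repeat split; ring.
  - destruct IH as [I1 [I2 [I3 I4]]]; [intros; apply Hj; lia|].
    assert (Ha : a (S (S R + n)) = a (S n)) by (rewrite <- (Hj (S n)) by lia; f_equal; lia).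
    set (m := S R + n) in *.
    replace (S R + S n) with (S m) by (unfold m; lia).
    replace (S (S R) + S n) with (S (S m)) by (unfold m; lia).
    replace (S (S R) + n) with (S m) in I2, I4 by (unfold m; lia).
    rewrite (cqSS a m), (cpSS a m), (cqSS a n), (cpSS a n), Ha, I1, I2, I3, I4.
    repeat split; ring.
Qed.


Open Scope nat_scope.

Lemma len_concat_repeat (W : list nat) f : length (concat (repeat W f)) = f * length W.
Proof. induction f; simpl; [reflexivity|]. rewrite length_app, IHf. lia. Qed.

Lemma nth_rep (W : list nat) c f i : 0 < length W ->
  i < length (concat (repeat W f) ++ firstn c W) ->
  nth i (concat (repeat W f) ++ firstn c W) 0 = nth (i mod length W) W 0.
Proof.
  intros Hr. revert i. induction f as [|f IH]; intros i Hi.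
  - simpl in *. rewrite length_firstn in Hi. rewrite nth_firstn.
    rewrite Nat.mod_small by lia. destruct (Nat.ltb_spec i c); [reflexivity| lia].
  - simpl. rewrite <- app_assoc. simpl in Hi. rewrite <- app_assoc in Hi.
    rewrite length_app in Hi.
    destruct (Nat.ltb_spec i (length W)).
    + rewrite app_nth1 by lia. rewrite Nat.mod_small by lia. reflexivity.
    + rewrite app_nth2 by lia. rewrite IH by lia.
      replace i with ((i - length W) + 1 * length W) at 2 by lia.
      rewrite Nat.Div0.mod_add. reflexivity.
Qed.

Lemma wp_nth W x i : i < length (word_pow W x) ->
  nth i (word_pow W x) 0 = nth (i mod length W) W 0.
Proof.
  unfold word_pow. intros Hi. destruct (Nat.eq_dec (length W) 0) as [E|E].
  - apply length_zero_iff_nil in E. subst W.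
    rewrite length_app, len_concat_repeat in Hi. simpl in Hi. rewrite length_firstn in Hi. simpl in Hi. lia.
  - apply nth_rep; [lia|exact Hi].
Qed.

Lemma Q2R_inject_Z z : Q2R (inject_Z z) = IZR z.
Proof. unfold Q2R. simpl. rewrite Rinv_1. ring. Qed.

Lemma wp_len W x : (0 < x)%Q ->
  (Q2R x * INR (length W) <= INR (length (word_pow W x)))%R.
Proof.
  intros Hx. unfold word_pow. rewrite length_app, len_concat_repeat, length_firstn.
  set (fl := Qfloor x).
  assert (H1 := Qfloor_le x). assert (H2 := Qlt_floor x). fold fl in H1, H2.
  apply Qle_Rle in H1. apply Qlt_Rlt in H2. apply Qlt_Rlt in Hx.
  rewrite Q2R_inject_Z in H1, H2. rewrite plus_IZR in H2.
  assert (Hx0 : Q2R 0 = 0%R) by (unfold Q2R; simpl; ring). rewrite Hx0 in Hx.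
  assert (Hfl : (0 <= fl)%Z). { assert (IZR (-1) < IZR fl)%R by lra. apply lt_IZR in H. lia. }
  set (c := Qceiling ((x - inject_Z fl) * inject_Z (Z.of_nat (length W)))).
  assert (H3 := Qle_ceiling ((x - inject_Z fl) * inject_Z (Z.of_nat (length W)))).
  fold c in H3. apply Qle_Rle in H3.
  rewrite Q2R_mult, Q2R_minus, !Q2R_inject_Z, <- INR_IZR_INZ in H3.
  assert (Hc : (0 <= c)%Z).
  { apply le_IZR. assert (0 <= INR (length W))%R by apply pos_INR. nra. }
  rewrite plus_INR, mult_INR.
  rewrite INR_IZR_INZ with (n := Z.to_nat fl), Z2Nat.id by exact Hfl.
  assert (0 <= INR (length W))%R by apply pos_INR.
  destruct (Nat.le_ge_cases (Z.to_nat c) (length W)).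
  - rewrite Nat.min_l by lia.
    rewrite INR_IZR_INZ with (n := Z.to_nat c), Z2Nat.id by exact Hc. nra.
  - rewrite Nat.min_r by lia. nra.
Qed.


Open Scope R_scope.

Lemma dnint_nonneg y : 0 <= dnint y.
Proof.
  unfold dnint. pose proof (base_Int_part y). unfold Rmin. destruct Rle_dec; lra.
Qed.

Lemma dnint_le y z : dnint y <= Rabs (y - IZR z).
Proof.
  unfold dnint. pose proof (base_Int_part y) as [H1 H2].
  set (n := Int_part y) in *.
  destruct (Z_le_gt_dec z n) as [Hz|Hz].
  - apply IZR_le in Hz. eapply Rle_trans; [apply Rmin_l|].
    rewrite Rabs_right by lra. lra.
  - assert (IZR (n + 1) <= IZR z) by (apply IZR_le; lia). rewrite plus_IZR in H.
    eapply Rle_trans; [apply Rmin_r|]. rewrite Rabs_left1 by lra. lra.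
Qed.

Lemma rep_shift (a : nat -> nat) (U : list nat) (x : Q) :
  begins_with a (U ++ word_pow U x) ->
  forall j, (j < length (word_pow U x))%nat -> a (length U + j)%nat = a j.
Proof.
  intros Hb j Hj.
  destruct (Nat.eq_dec (length U) 0) as [E|E].
  { rewrite E. reflexivity. }
  assert (Hl : length (U ++ word_pow U x) = (length U + length (word_pow U x))%nat) by apply length_app.
  assert (Ha : forall i, (i < length (word_pow U x))%nat -> a (length U + i)%nat = nth (i mod length U) U 0%nat).
  { intros i Hi. rewrite Hb by lia. rewrite app_nth2 by lia.
    replace (length U + i - length U)%nat with i by lia. apply wp_nth; exact Hi. }
  rewrite Ha by exact Hj.
  destruct (Nat.lt_ge_cases j (length U)).
  - rewrite Hb by lia. rewrite app_nth1 by lia. rewrite Nat.mod_small by lia. reflexivity.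
  - replace j with (length U + (j - length U))%nat at 2 by lia.
    rewrite Ha by lia.
    replace j with ((j - length U) + 1 * length U)%nat at 1 by lia.
    rewrite Nat.Div0.mod_add. reflexivity.
Qed.


Open Scope Z_scope.

Lemma php (D A B : Z) (K : nat) : 0 < D -> D < Z.of_nat ((K+1)*(K+1)) ->
  exists u v : Z, (u <> 0 \/ v <> 0) /\ Z.abs u <= Z.of_nat K /\ Z.abs v <= Z.of_nat K /\
    (u*A + v*B) mod D = 0.
Proof.
  intros HD HK.
  apply NNPP. intros Hn.
  set (N := (K+1)%nat).
  set (g := fun t : nat => Z.of_nat (t / N) * A + Z.of_nat (t mod N) * B).
  set (f := fun t : nat => Z.to_nat (g t mod D)).
  assert (Hnd : NoDup (map f (seq 0 (N*N)))).
  { apply NoDup_map_NoDup_ForallPairs; [|apply seq_NoDup].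
    intros t1 t2 H1 H2 Hf. apply in_seq in H1, H2.
    unfold f in Hf. 
    pose proof (Z.mod_pos_bound (g t1) D HD). pose proof (Z.mod_pos_bound (g t2) D HD).
    apply Z2Nat.inj in Hf; try lia.
    assert (Hm : (g t1 - g t2) mod D = 0).
    { rewrite Zminus_mod, Hf, Z.sub_diag. reflexivity. }
    assert (HN : (0 < N)%nat) by (unfold N; lia).
    assert (Hd1 : (t1 / N < N)%nat) by (apply Nat.Div0.div_lt_upper_bound; lia).
    assert (Hd2 : (t2 / N < N)%nat) by (apply Nat.Div0.div_lt_upper_bound; lia).
    assert (Hm1 : (t1 mod N < N)%nat) by (apply Nat.mod_upper_bound; lia).
    assert (Hm2 : (t2 mod N < N)%nat) by (apply Nat.mod_upper_bound; lia).
    destruct (classic (t1 / N = t2 / N /\ t1 mod N = t2 mod N)%nat) as [[E1 E2]|Hne].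
    - rewrite (Nat.div_mod_eq t1 N), (Nat.div_mod_eq t2 N). rewrite E1, E2. reflexivity.
    - exfalso. apply Hn.
      exists (Z.of_nat (t1 / N) - Z.of_nat (t2 / N)), (Z.of_nat (t1 mod N) - Z.of_nat (t2 mod N)).
      split; [|split; [|split]].
      + destruct (Nat.eq_dec (t1 / N) (t2 / N)); [right|left]; lia.
      + unfold N in *; lia.
      + unfold N in *; lia.
      + rewrite <- Hm. f_equal. unfold g. ring. }
  assert (Hinc : incl (map f (seq 0 (N*N))) (seq 0 (Z.to_nat D))).
  { intros y Hy. apply in_map_iff in Hy. destruct Hy as [t [Ht _]]. subst y.
    apply in_seq. unfold f. pose proof (Z.mod_pos_bound (g t) D HD). lia. }
  pose proof (NoDup_incl_length Hnd Hinc) as Hl.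
  rewrite length_map, !length_seq in Hl. unfold N in Hl. lia.
Qed.


Open Scope R_scope.

Lemma le_div a b c d : 0 < b -> 0 < d -> a * d <= c * b -> a / b <= c / d.
Proof.
  intros Hb Hd H.
  apply Rmult_le_reg_r with (b * d); [nra|].
  replace (a / b * (b * d)) with (a * d) by (field; repeat split; lra).
  replace (c / d * (b * d)) with (c * b) by (field; repeat split; lra). exact H.
Qed.

Lemma delta_bound qR qr qs pR Nq al y xs dl :
  1 <= qr -> 1 <= qs -> qr * qs <= Nq ->
  Rabs (al - y) <= / (Nq * Nq) -> Rabs (al - xs) <= / (qs * qs) ->
  Rabs (qR * al - pR) <= / qr -> 0 <= qR <= qr -> 0 <= pR <= qR ->
  0 <= al <= 1 -> 0 <= y <= 1 ->
  dl = (qR * y - pR) * (y - xs) + (al - y) * (qR * (al + y) + qr - pR) ->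
  Rabs dl <= 8 / (qr * (qs * qs)).
Proof.
  intros H1 H2 H3 Ht Hx Hp HqR HpR Hal Hy Hdl.
  assert (HN : 0 < Nq) by nra.
  set (tau := / (qr * qs * (qr * qs))).
  assert (Htau : / (Nq * Nq) <= tau).
  { unfold tau. assert (0 < qr * qs) by nra. apply Rinv_le_contravar.
    - apply Rmult_lt_0_compat; lra.
    - apply Rmult_le_compat; lra. }
  assert (Hqs2 : 1 <= qs*qs) by nra.
  set (w := / (qr * (qs * qs))).
  assert (Hw : 0 < w) by (unfold w; apply Rinv_0_lt_compat; nra).
  assert (Hiqr : / qr = w * (qs*qs)) by (unfold w; field; repeat split; lra).
  assert (Hiqs : / (qs*qs) = w * qr) by (unfold w; field; repeat split; lra).
  assert (Htw : tau * qr = w) by (unfold tau, w; field; repeat split; lra).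
  assert (Ht' : Rabs (al - y) <= tau) by lra.
  assert (A1 : Rabs (qR * y - pR) <= 2 * w * (qs*qs)).
  { replace (qR * y - pR) with ((qR * al - pR) - qR * (al - y)) by ring.
    eapply Rle_trans; [apply Rabs_triang|]. rewrite Rabs_Ropp, Rabs_mult, (Rabs_right qR) by lra.
    assert (qR * Rabs (al - y) <= qr * tau) by (apply Rmult_le_compat; try lra; apply Rabs_pos).
    assert (Hqt : qr * tau = w) by (rewrite Rmult_comm; exact Htw).
    assert (1 <= qs*qs) by nra. assert (w <= w * (qs*qs)) by nra. lra. }
  assert (A2 : Rabs (y - xs) <= 2 * w * qr).
  { replace (y - xs) with ((al - xs) - (al - y)) by ring.
    eapply Rle_trans; [apply Rabs_triang|]. rewrite Rabs_Ropp.
    assert (0 < tau) by (unfold tau; apply Rinv_0_lt_compat; nra).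
    assert (1 <= qr*qr) by nra.
    assert (tau <= w * qr) by (rewrite <- Htw; nra). lra. }
  assert (A3 : Rabs (qR * (al + y) + qr - pR) <= 3 * qr).
  { rewrite Rabs_right by nra. nra. }
  rewrite Hdl. eapply Rle_trans; [apply Rabs_triang|]. rewrite !Rabs_mult.
  assert (B1 : Rabs (qR * y - pR) * Rabs (y - xs) <= (2 * w * (qs*qs)) * (2 * w * qr))
    by (apply Rmult_le_compat; try apply Rabs_pos; lra).
  assert (B2 : Rabs (al - y) * Rabs (qR * (al + y) + qr - pR) <= tau * (3 * qr))
    by (apply Rmult_le_compat; try apply Rabs_pos; lra).
  assert (E : 8 / (qr * (qs * qs)) = 8 * w) by (unfold w; field; repeat split; lra).
  rewrite E.
  assert (w * (qs * qs) * qr = 1) by (unfold w; field; repeat split; lra).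
  nra.
Qed.

Lemma final_bound K Dabs c' E C cd qR qr qs Nq dl q eta d1 d2 :
  0 <= K -> 0 < Dabs -> K * K <= Dabs -> Dabs <= c' * qr -> 0 <= E -> 0 <= C -> 0 < cd ->
  0 <= qR <= qr -> 1 <= qr -> 1 <= qs -> qr * qs <= Nq <= 2 * qr * qs ->
  Rabs dl <= 8 / (qr * (qs * qs)) ->
  0 <= q <= 2 * K * Nq -> Rabs eta <= 2 * K / Nq ->
  0 <= d1 <= Rabs eta ->
  0 <= d2 <= (E * qR * Rabs eta + E * C * q * Rabs dl / cd) / Dabs ->
  (q * d1 * d2) ^ 2 <= 64 * c' * (E * (1 + 16 * C / cd)) ^ 2 * qr / (qs * qs).
Proof.
  intros HK HD HKD HDc HE HC Hcd HqR Hqr Hqs [HN1 HN2] Hdl [Hq0 Hq] Heta Hd1 Hd2.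
  set (G := E * (1 + 16 * C / cd)).
  assert (HN : 0 < Nq) by nra.
  set (iN := / Nq). set (iq := / qs).
  assert (HiN : Nq * iN = 1) by (unfold iN; field; lra).
  assert (Hiq : qs * iq = 1) by (unfold iq; field; lra).
  assert (HiN0 : 0 < iN) by (unfold iN; apply Rinv_0_lt_compat; lra).
  assert (Hiq0 : 0 < iq) by (unfold iq; apply Rinv_0_lt_compat; lra).
  assert (Heta' : Rabs eta <= 2 * K * iN) by (unfold iN; lra).
  assert (Hdl' : Rabs dl * (qr * (qs * qs)) <= 8).
  { replace 8 with (8 / (qr * (qs * qs)) * (qr * (qs * qs))) by (field; nra).
    apply Rmult_le_compat_r; [nra|exact Hdl]. }
  assert (HqRiN : qR * iN <= iq).
  { assert (qR * qs <= Nq) by nra.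
    assert (qR * iN * (qs * Nq) <= iq * (qs * Nq)).
    { replace (qR * iN * (qs * Nq)) with (qR * qs * (Nq * iN)) by ring.
      replace (iq * (qs * Nq)) with (Nq * (qs * iq)) by ring. rewrite HiN, Hiq. lra. }
    apply Rmult_le_reg_r with (qs * Nq); nra. }
  assert (S1 : E * qR * Rabs eta <= 2 * K * E * iq).
  { assert (qR * Rabs eta <= qR * (2 * K * iN)) by (apply Rmult_le_compat_l; lra).
    assert (qR * (2 * K * iN) <= 2 * K * iq) by nra.
    nra. }
  assert (Hadl : 0 <= Rabs dl) by apply Rabs_pos.
  assert (S2 : q * Rabs dl <= 32 * K * iq).
  { assert (q * Rabs dl <= 2 * K * Nq * Rabs dl) by nra.
    assert (Nq * Rabs dl <= 2 * qr * qs * Rabs dl) by nra.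
    assert (qr * qs * Rabs dl * qs <= 8) by nra.
    assert (qs * Rabs dl * qr <= 8 * iq).
    { apply Rmult_le_reg_l with qs; [lra|]. replace (qs * (8 * iq)) with (8 * (qs * iq)) by ring.
      rewrite Hiq. nra. }
    nra. }
  assert (S3 : E * C * q * Rabs dl / cd <= 2 * K * iq * (16 * E * C / cd)).
  { replace (2 * K * iq * (16 * E * C / cd)) with ((E * C * (32 * K * iq)) / cd) by (field; lra).
    unfold Rdiv. apply Rmult_le_compat_r; [apply Rlt_le, Rinv_0_lt_compat; lra|].
    replace (E * C * q * Rabs dl) with (E * C * (q * Rabs dl)) by ring.
    assert (0 <= E * C) by nra.
    assert (E * C * (q * Rabs dl) <= E * C * (32 * K * iq)) by (apply Rmult_le_compat_l; lra).
    nra. }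
  assert (HG : 2 * K * E * iq + 2 * K * iq * (16 * E * C / cd) = 2 * K * iq * G).
  { unfold G. field. lra. }
  assert (Hd2' : d2 * Dabs <= 2 * K * iq * G).
  { destruct Hd2 as [_ Hd2]. 
    assert (d2 <= (2 * K * iq * G) / Dabs).
    { eapply Rle_trans; [exact Hd2|]. unfold Rdiv. apply Rmult_le_compat_r; [apply Rlt_le, Rinv_0_lt_compat; lra|]. lra. }
    apply Rmult_le_reg_r with (/ Dabs); [apply Rinv_0_lt_compat; lra|].
    replace (d2 * Dabs * / Dabs) with d2 by (field; lra). exact H. }
  assert (Hqd1 : q * d1 <= 4 * K * K).
  { assert (q * d1 <= q * Rabs eta) by (apply Rmult_le_compat_l; lra).
    assert (q * Rabs eta <= (2 * K * Nq) * (2 * K * iN)) by (apply Rmult_le_compat; try lra; apply Rabs_pos).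
    replace ((2 * K * Nq) * (2 * K * iN)) with (4 * K * K * (Nq * iN)) in H0 by ring.
    rewrite HiN in H0. lra. }
  assert (HG0 : 0 <= G).
  { unfold G. apply Rmult_le_pos; [lra|]. assert (0 <= 16 * C / cd) by (unfold Rdiv; apply Rmult_le_pos; [lra|apply Rlt_le, Rinv_0_lt_compat; lra]). lra. }
  assert (Hprod0 : 0 <= q * d1 * d2).
  { destruct Hd2. apply Rmult_le_pos; [apply Rmult_le_pos|]; lra. }
  assert (Hprod : q * d1 * d2 <= 8 * K * G * iq).
  { assert (HdD : (q * d1 * d2) * Dabs <= (4 * K * K) * (2 * K * iq * G)).
    { replace ((q * d1 * d2) * Dabs) with ((q * d1) * (d2 * Dabs)) by ring.
      destruct Hd2. apply Rmult_le_compat; try nra. }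
    assert (HKK : (4 * K * K) * (2 * K * iq * G) <= Dabs * (8 * K * G * iq)).
    { replace ((4 * K * K) * (2 * K * iq * G)) with ((K * K) * (8 * K * G * iq)) by ring.
      apply Rmult_le_compat_r; [|exact HKD]. apply Rmult_le_pos; [|lra]. nra. }
    apply Rmult_le_reg_r with Dabs; [lra|]. nra. }
  assert (Hsq : (q * d1 * d2) ^ 2 <= (8 * K * G * iq) ^ 2) by (apply pow_incr; lra).
  eapply Rle_trans; [exact Hsq|].
  replace ((8 * K * G * iq) ^ 2) with (64 * (K * K) * G ^ 2 * (iq * iq)) by ring.
  replace (64 * c' * G ^ 2 * qr / (qs * qs)) with (64 * (c' * qr) * G ^ 2 * (iq * iq))
    by (unfold iq; field; lra).
  assert (0 <= G ^ 2 * (iq * iq)) by (apply Rmult_le_pos; nra).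
  assert (K * K <= c' * qr) by lra.
  nra.
Qed.


Open Scope R_scope.

Lemma delta_step (a : nat -> nat) (alpha : R) (Rn s : nat) :
  (forall k, (1 <= a k)%nat) -> is_lim_seq (xc a) alpha ->
  (1 <= s)%nat -> (forall j, (j < s)%nat -> a (S Rn + j)%nat = a j) ->
  let qR := INR (conv_q a Rn) in let pR := INR (conv_p a Rn) in
  let qr := INR (conv_q a (S Rn)) in let pr := INR (conv_p a (S Rn)) in
  let qs := INR (conv_q a s) in let Nq := INR (conv_q a (S Rn + s)) in
  qr * qs <= Nq <= 2 * qr * qs /\
  Rabs (qR * alpha ^ 2 + (qr - pR) * alpha - pr) <= 8 / (qr * (qs * qs)).
Proof.
  intros Ha Hlim Hs Hj qR pR qr pr qs Nq.
  destruct (cf_shift a Rn (s - 1)) as [_ [I2 [_ I4]]].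
  { intros j Hj'. apply Hj. lia. }
  replace (S (S Rn) + (s - 1))%nat with (S Rn + s)%nat in I2, I4 by lia.
  replace (S (s - 1)) with s in I2, I4 by lia.
  set (ps := INR (conv_p a s)). set (Np := INR (conv_p a (S Rn + s))).
  assert (HNq : Nq = qR * ps + qr * qs) by (unfold Nq; rewrite I2, plus_INR, !mult_INR; reflexivity).
  assert (HNp : Np = pR * ps + pr * qs) by (unfold Np; rewrite I4, plus_INR, !mult_INR; reflexivity).
  assert (H1 : qR <= qr) by (apply le_INR, cq_mono, Ha).
  assert (H2 : ps <= qs) by (apply le_INR, cp_le_cq, Ha).
  assert (H3 : pR <= qR) by (apply le_INR, cp_le_cq, Ha).
  assert (H4 : pr <= qr) by (apply le_INR, cp_le_cq, Ha).
  assert (H5 : 0 <= pR) by apply pos_INR.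
  assert (H6 : 0 <= ps) by apply pos_INR.
  assert (H7 : 1 <= qr) by (apply (le_INR 1), cq_pos, Ha).
  assert (H8 : 1 <= qs) by (apply (le_INR 1), cq_pos, Ha).
  assert (H9 : 0 <= pr) by apply pos_INR.
  assert (HN : qr * qs <= Nq <= 2 * qr * qs) by (rewrite HNq; split; nra).
  split; [exact HN|].
  assert (HNpos : 0 < Nq) by nra.
  assert (Hal := alpha_01 a Ha alpha Hlim).
  apply (delta_bound qR qr qs pR Nq alpha (Np / Nq) (ps / qs)); try lra.
  - eapply Rle_trans; [apply (approx_x a Ha alpha Hlim (S Rn + s))|].
    apply Rinv_le_contravar; [nra|]. fold Nq. apply Rmult_le_compat_l; [lra|].
    apply le_INR, cq_mono, Ha.
  - eapply Rle_trans; [apply (approx_x a Ha alpha Hlim s)|].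
    apply Rinv_le_contravar; [nra|]. fold qs. apply Rmult_le_compat_l; [lra|].
    apply le_INR, cq_mono, Ha.
  - apply (approx a Ha alpha Hlim Rn).
  - assert (Np <= Nq) by (apply le_INR, cp_le_cq, Ha).
    assert (0 <= Np) by apply pos_INR.
    split.
    + unfold Rdiv. apply Rmult_le_pos; [lra|]. apply Rlt_le, Rinv_0_lt_compat; lra.
    + apply Rmult_le_reg_r with Nq; [lra|]. unfold Rdiv. rewrite Rmult_assoc, Rinv_l by lra. lra.
  - rewrite HNp. rewrite HNq in HNpos |- *. field. lra.
Qed.


Open Scope R_scope.

Lemma Zdet (a : nat -> nat) n :
  (Z.of_nat (conv_p a (S n)) * Z.of_nat (conv_q a n) - Z.of_nat (conv_p a n) * Z.of_nat (conv_q a (S n)) = 1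
  \/ Z.of_nat (conv_p a (S n)) * Z.of_nat (conv_q a n) - Z.of_nat (conv_p a n) * Z.of_nat (conv_q a (S n)) = -1)%Z.
Proof.
  induction n as [|n IH].
  - rewrite cq0, cq1, cp0, cp1. simpl. lia.
  - rewrite cqSS, cpSS, !Nat2Z.inj_add, !Nat2Z.inj_mul.
    match goal with |- (?X = _ \/ _)%Z =>
      assert (X = - (Z.of_nat (conv_p a (S n)) * Z.of_nat (conv_q a n) - Z.of_nat (conv_p a n) * Z.of_nat (conv_q a (S n))))%Z by ring end.
    lia.
Qed.

Lemma INR_abs_nat z : INR (Z.abs_nat z) = Rabs (IZR z).
Proof. rewrite INR_IZR_INZ, Zabs2Nat.id_abs, abs_IZR. reflexivity. Qed.

Lemma cd_pos (alpha kappa : R) (za zb zc zd : Z) :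
  0 < kappa -> (forall q : nat, (1 <= q)%nat -> kappa <= INR q * dnint (INR q * alpha)) ->
  (za * zd - zb * zc <> 0)%Z -> 0 < Rabs (IZR zc * alpha + IZR zd).
Proof.
  intros Hk Hbad He.
  destruct (Req_dec (IZR zc * alpha + IZR zd) 0) as [H0|H0]; [|apply Rabs_pos_lt; exact H0].
  exfalso.
  destruct (Z.eq_dec zc 0) as [Ec|Ec].
  - subst zc. rewrite Rmult_0_l, Rplus_0_l in H0. apply eq_IZR in H0. subst zd. lia.
  - assert (Hq : (1 <= Z.abs_nat zc)%nat) by lia.
    specialize (Hbad _ Hq). rewrite INR_abs_nat in Hbad.
    assert (Hz : exists z, Rabs (IZR zc) * alpha - IZR z = 0).
    { destruct (Z_lt_le_dec 0 zc) as [l|l].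
      - exists (- zd)%Z. apply IZR_lt in l. rewrite Rabs_right by lra. rewrite opp_IZR. lra.
      - assert (zc < 0)%Z by lia. apply IZR_lt in H. exists zd. rewrite Rabs_left by lra. lra. }
    destruct Hz as [z Hz].
    pose proof (dnint_le (Rabs (IZR zc) * alpha) z) as Hd. rewrite Hz, Rabs_R0 in Hd.
    pose proof (dnint_nonneg (Rabs (IZR zc) * alpha)).
    assert (0 <= Rabs (IZR zc)) by apply Rabs_pos.
    assert (Rabs (IZR zc) * dnint (Rabs (IZR zc) * alpha) = 0) by (replace (dnint (Rabs (IZR zc) * alpha)) with 0 by lra; ring).
    lra.
Qed.

Lemma choose_sign (qN qN1 pN pN1 K : Z) (P : Z -> Z -> Prop) u v :
  (pN1*qN - pN*qN1 = 1 \/ pN1*qN - pN*qN1 = -1)%Z -> (K < qN1)%Z ->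
  (u <> 0 \/ v <> 0)%Z -> (Z.abs u <= K)%Z -> (Z.abs v <= K)%Z -> P u v ->
  (forall u v, P u v -> P (-u)%Z (-v)%Z) ->
  exists u' v', (u' <> 0 \/ v' <> 0)%Z /\ (Z.abs u' <= K)%Z /\ (Z.abs v' <= K)%Z /\ P u' v' /\
    (0 < u'*qN + v'*qN1)%Z.
Proof.
  intros Hdt HK Huv Hu Hv HP HPn.
  assert (Hnz : (u*qN + v*qN1 <> 0)%Z).
  { intros Hq. set (pz := (u*pN + v*pN1)%Z).
    assert (I1 : (pz*qN1 - (u*qN + v*qN1)*pN1 = - u * (pN1*qN - pN*qN1))%Z) by (unfold pz; ring).
    assert (I2 : (pz*qN - (u*qN + v*qN1)*pN = v * (pN1*qN - pN*qN1))%Z) by (unfold pz; ring).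
    rewrite Hq in I1, I2. 
    destruct (Z.eq_dec pz 0) as [Hp|Hp].
    - rewrite Hp in I1, I2. destruct Hdt as [Hd|Hd]; rewrite Hd in I1, I2; lia.
    - assert (Z.abs (pz * qN1) = Z.abs u) by (destruct Hdt as [Hd|Hd]; rewrite Hd in I1; lia).
      rewrite Z.abs_mul in H.
      assert (1 <= Z.abs pz)%Z by lia.
      assert (0 <= Z.abs u)%Z by lia.
      assert (Z.abs qN1 = qN1) by lia. rewrite H2 in H. nia. }
  destruct (Z_lt_le_dec 0 (u*qN + v*qN1)).
  - exists u, v. auto.
  - exists (-u)%Z, (-v)%Z. repeat split; try lia. apply HPn, HP.
Qed.


Open Scope R_scope.

Lemma main_step (a : nat -> nat) (alpha kappa : R) (za zb zc zd : Z) (Rn s : nat) :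
  (forall k, (1 <= a k)%nat) -> is_lim_seq (xc a) alpha ->
  0 < kappa -> (forall q : nat, (1 <= q)%nat -> kappa <= INR q * dnint (INR q * alpha)) ->
  (za * zd - zb * zc <> 0)%Z ->
  (1 <= s)%nat -> (forall j, (j < s)%nat -> a (S Rn + j)%nat = a j) ->
  let cd := Rabs (IZR zc * alpha + IZR zd) in
  let E := Rabs (IZR (za*zd - zb*zc)) in
  let c' := IZR zd * IZR zd + Rabs (IZR zc * IZR zd) + IZR zc * IZR zc in
  let qr := INR (conv_q a (S Rn)) in let qs := INR (conv_q a s) in
  (qs * qs * kappa * cd <= 8 * E * E * Rabs (IZR zc) \/ qs <= c' \/
   exists q : nat, (1 <= q)%nat /\
     (INR q * dnint (INR q * alpha) * dnint (INR q * ((IZR za * alpha + IZR zb) / (IZR zc * alpha + IZR zd)))) ^ 2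
       <= 64 * c' * (E * (1 + 16 * Rabs (IZR zc) / cd)) ^ 2 * qr / (qs * qs)).
Proof.
  intros Ha Hlim Hk Hbad He Hs Hj cd E c' qr qs.
  assert (Hcd : 0 < cd) by (apply (cd_pos alpha kappa za zb zc zd); assumption).
  destruct (delta_step a alpha Rn s Ha Hlim Hs Hj) as [HN Hdl].
  set (qR := INR (conv_q a Rn)) in *. set (pR := INR (conv_p a Rn)) in *.
  set (pr := INR (conv_p a (S Rn))) in *. fold qr qs in HN, Hdl.
  set (Nq := INR (conv_q a (S Rn + s))) in *.
  set (dl := qR * alpha ^ 2 + (qr - pR) * alpha - pr) in *.
  set (zQ := Z.of_nat (conv_q a Rn)).
  set (zB := (Z.of_nat (conv_q a (S Rn)) - Z.of_nat (conv_p a Rn))%Z).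
  set (zC := Z.of_nat (conv_p a (S Rn))).
  set (zD := (zd*zd*zQ - zc*zd*zB - zc*zc*zC)%Z).
  set (ze := (za*zd - zb*zc)%Z) in *.
  set (zF := (zb*zd*zQ - za*zc*zC - zb*zc*zB)%Z).
  assert (EQ : IZR zQ = qR) by (unfold zQ, qR; rewrite <- INR_IZR_INZ; reflexivity).
  assert (EB : IZR zB = qr - pR) by (unfold zB, qr, pR; rewrite minus_IZR, <- !INR_IZR_INZ; reflexivity).
  assert (EC : IZR zC = pr) by (unfold zC, pr; rewrite <- INR_IZR_INZ; reflexivity).
  set (al := IZR za). set (bl := IZR zb). set (cl := IZR zc). set (dd := IZR zd).
  assert (ED : IZR zD = dd*dd*qR - cl*dd*(qr - pR) - cl*cl*pr)
    by (unfold zD; rewrite !minus_IZR, !mult_IZR, EQ, EB, EC; reflexivity).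
  assert (Ee : IZR ze = al*dd - bl*cl) by (unfold ze; rewrite minus_IZR, !mult_IZR; reflexivity).
  assert (EF : IZR zF = bl*dd*qR - al*cl*pr - bl*cl*(qr - pR))
    by (unfold zF; rewrite !minus_IZR, !mult_IZR, EQ, EB, EC; reflexivity).
  assert (Iden : IZR zD * (al * alpha + bl) - (IZR ze * qR * alpha + IZR zF) * (cl * alpha + dd)
                 = - IZR ze * cl * dl).
  { rewrite ED, Ee, EF. unfold dl. ring. }
  assert (H1 : qR <= qr) by (apply le_INR, cq_mono, Ha).
  assert (H3 : pR <= qR) by (apply le_INR, cp_le_cq, Ha).
  assert (H4 : pr <= qr) by (apply le_INR, cp_le_cq, Ha).
  assert (H5 : 0 <= pR) by apply pos_INR.
  assert (H7 : 1 <= qr) by (apply (le_INR 1), cq_pos, Ha).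
  assert (H7' : 1 <= qR) by (apply (le_INR 1), cq_pos, Ha).
  assert (H8 : 1 <= qs) by (apply (le_INR 1), cq_pos, Ha).
  assert (H9 : 0 <= pr) by apply pos_INR.
  assert (HDc : Rabs (IZR zD) <= c' * qr).
  { rewrite ED. unfold c'. fold cl dd.
    eapply Rle_trans; [apply Rabs_triang|]. rewrite Rabs_Ropp.
    eapply Rle_trans; [apply Rplus_le_compat_r; apply Rabs_triang|]. rewrite Rabs_Ropp.
    rewrite !Rabs_mult.
    assert (Rabs dd * Rabs dd = dd * dd) by (rewrite <- Rabs_mult; apply Rabs_right; nra).
    assert (Rabs cl * Rabs cl = cl * cl) by (rewrite <- Rabs_mult; apply Rabs_right; nra).
    rewrite (Rabs_right qR), (Rabs_right (qr - pR)), (Rabs_right pr) by lra.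
    assert (0 <= Rabs cl) by apply Rabs_pos. assert (0 <= Rabs dd) by apply Rabs_pos.
    assert (0 <= Rabs cl * Rabs dd) by nra.
    nra. }
  assert (HE : E = Rabs (IZR ze)) by reflexivity.
  assert (Hdl' : Rabs dl * (qr * (qs * qs)) <= 8).
  { replace 8 with (8 / (qr * (qs * qs)) * (qr * (qs * qs))) by (field; lra).
    apply Rmult_le_compat_r; [nra|exact Hdl]. }
  assert (HzQ : (1 <= zQ)%Z) by (unfold zQ; pose proof (cq_pos a Ha Rn); lia).
  destruct (Z.eq_dec zD 0) as [HD0|HD0].
  - left.
    set (w := IZR ze * qR * alpha + IZR zF).
    assert (HI : w * (cl * alpha + dd) = IZR ze * cl * dl).
    { rewrite HD0 in Iden. replace (IZR 0) with 0 in Iden by reflexivity. unfold w. lra. }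
    assert (Habs : Rabs w * cd = E * Rabs cl * Rabs dl).
    { unfold cd. fold cl dd. rewrite <- Rabs_mult, HI, !Rabs_mult, HE. reflexivity. }
    assert (Hq : (1 <= Z.abs_nat (ze * zQ))%nat) by lia.
    pose proof (Hbad _ Hq) as Hb. rewrite INR_abs_nat, mult_IZR, Rabs_mult, EQ in Hb.
    rewrite (Rabs_right qR) in Hb by lra. rewrite <- HE in Hb.
    assert (Hz : exists z, Rabs (E * qR * alpha - IZR z) = Rabs w).
    { destruct (Z_lt_le_dec 0 ze) as [l|l].
      - exists (- zF)%Z. apply IZR_lt in l. rewrite HE, (Rabs_right (IZR ze)) by lra. rewrite opp_IZR.
        unfold w. f_equal. ring.
      - assert (ze < 0)%Z by lia. apply IZR_lt in H. exists zF. rewrite HE, (Rabs_left (IZR ze)) by lra.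
        rewrite <- Rabs_Ropp. unfold w. f_equal. ring. }
    destruct Hz as [z Hz].
    pose proof (dnint_le (E * qR * alpha) z) as Hd. rewrite Hz in Hd.
    assert (HE0 : 0 <= E) by (rewrite HE; apply Rabs_pos).
    assert (Hk2 : kappa <= E * qR * Rabs w).
    { eapply Rle_trans; [exact Hb|]. apply Rmult_le_compat_l; [nra|exact Hd]. }
    assert (Hk3 : kappa * cd <= E * qR * (E * Rabs cl * Rabs dl)).
    { rewrite <- Habs. replace (E * qR * (Rabs w * cd)) with ((E * qR * Rabs w) * cd) by ring.
      apply Rmult_le_compat_r; lra. }
    assert (0 <= Rabs cl) by apply Rabs_pos. assert (0 <= Rabs dl) by apply Rabs_pos.
    assert (Hx : qR * Rabs dl * (qs * qs) <= 8).
    { assert (qR * Rabs dl * (qs*qs) <= qr * Rabs dl * (qs * qs)).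
      { apply Rmult_le_compat_r; [nra|]. apply Rmult_le_compat_r; lra. }
      nra. }
    assert (0 <= E * E * Rabs cl) by (apply Rmult_le_pos; nra).
    unfold cl in *. nra.
  - destruct (Rle_dec qs c') as [Hc|Hc]; [right; left; exact Hc|]. right; right.
    apply Rnot_le_lt in Hc.
    set (AD := Z.abs zD). assert (HAD : (0 < AD)%Z) by (unfold AD; lia).
    pose proof (Z.sqrt_spec AD (Z.lt_le_incl _ _ HAD)) as Hsq. simpl in Hsq. destruct Hsq as [Hs1 Hs2].
    set (K := Z.to_nat (Z.sqrt AD)).
    assert (HKz : Z.of_nat K = Z.sqrt AD) by (apply Z2Nat.id, Z.sqrt_nonneg).
    set (N := (Rn + s)%nat).
    assert (HSN : S N = (S Rn + s)%nat) by (unfold N; lia).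
    set (qN := Z.of_nat (conv_q a N)). set (qN1 := Z.of_nat (conv_q a (S N))).
    set (pN := Z.of_nat (conv_p a N)). set (pN1 := Z.of_nat (conv_p a (S N))).
    assert (EqN1 : IZR qN1 = Nq) by (unfold qN1, Nq; rewrite <- INR_IZR_INZ, HSN; reflexivity).
    assert (HADr : IZR AD = Rabs (IZR zD)) by (unfold AD; apply abs_IZR).
    assert (HKle : (Z.of_nat K <= AD)%Z) by (rewrite HKz; nia).
    assert (HKN : (Z.of_nat K < qN1)%Z).
    { assert (IZR AD < IZR qN1) by (rewrite HADr, EqN1; nra). apply lt_IZR in H. lia. }
    assert (HqNle : (qN <= qN1)%Z) by (unfold qN, qN1; pose proof (cq_mono a Ha N); lia).
    assert (HqN0 : (1 <= qN)%Z) by (unfold qN; pose proof (cq_pos a Ha N); lia).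
    set (A := (ze*zQ*pN + zF*qN)%Z). set (B := (ze*zQ*pN1 + zF*qN1)%Z).
    destruct (php AD A B K HAD) as [u [v [Huv [Hu [Hv Hm]]]]].
    { rewrite Nat2Z.inj_mul, Nat2Z.inj_add, HKz. simpl (Z.of_nat 1). lia. }
    destruct (choose_sign qN qN1 pN pN1 (Z.of_nat K) (fun u v => ((u*A + v*B) mod AD = 0)%Z) u v)
      as [u' [v' [Huv' [Hu' [Hv' [Hm' Hqz]]]]]]; try assumption.
    { apply (Zdet a N). }
    { intros u0 v0 H0. replace (-u0*A + -v0*B)%Z with (-(u0*A + v0*B))%Z by ring.
      apply Z_mod_zero_opp_full. exact H0. }
    clear u v Huv Hu Hv Hm. rename u' into u. rename v' into v.
    set (qz := (u*qN + v*qN1)%Z) in *. set (pz := (u*pN + v*pN1)%Z).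
    exists (Z.to_nat qz). split; [lia|].
    assert (Hqr : INR (Z.to_nat qz) = IZR qz) by (rewrite INR_IZR_INZ, Z2Nat.id by lia; reflexivity).
    rewrite Hqr.
    set (X := (ze*zQ*pz + zF*qz)%Z).
    assert (HX : X = (u*A + v*B)%Z) by (unfold X, A, B, pz, qz; ring).
    assert (Hdiv : (zD | X)%Z).
    { apply Z.divide_abs_l. fold AD. apply Z.mod_divide; [lia|]. rewrite HX. exact Hm'. }
    destruct Hdiv as [m Hmz].
    assert (HXr : IZR zD * IZR m = IZR ze * qR * IZR pz + IZR zF * IZR qz).
    { rewrite <- mult_IZR, Z.mul_comm, <- Hmz. unfold X. rewrite plus_IZR, !mult_IZR, EQ. reflexivity. }
    set (eta := IZR qz * alpha - IZR pz).
    assert (Heta_eq : eta = IZR u * (IZR qN * alpha - IZR pN) + IZR v * (IZR qN1 * alpha - IZR pN1)).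
    { unfold eta, qz, pz. rewrite !plus_IZR, !mult_IZR. ring. }
    assert (HNpos : 0 < Nq) by nra.
    assert (Ap1 : Rabs (IZR qN * alpha - IZR pN) <= / Nq).
    { unfold qN, pN. rewrite <- !INR_IZR_INZ. eapply Rle_trans; [apply (approx a Ha alpha Hlim N)|].
      rewrite HSN. fold Nq. lra. }
    assert (Ap2 : Rabs (IZR qN1 * alpha - IZR pN1) <= / Nq).
    { unfold qN1, pN1. rewrite <- !INR_IZR_INZ. eapply Rle_trans; [apply (approx a Ha alpha Hlim (S N))|].
      rewrite HSN. fold Nq. apply Rinv_le_contravar; [lra|]. apply le_INR, cq_mono, Ha. }
    assert (HKr : INR K = IZR (Z.of_nat K)) by apply INR_IZR_INZ.
    assert (Hur : Rabs (IZR u) <= INR K) by (rewrite <- abs_IZR, HKr; apply IZR_le; exact Hu').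
    assert (Hvr : Rabs (IZR v) <= INR K) by (rewrite <- abs_IZR, HKr; apply IZR_le; exact Hv').
    assert (Heta : Rabs eta <= 2 * INR K / Nq).
    { rewrite Heta_eq. eapply Rle_trans; [apply Rabs_triang|]. rewrite !Rabs_mult.
      assert (Rabs (IZR u) * Rabs (IZR qN * alpha - IZR pN) <= INR K * / Nq)
        by (apply Rmult_le_compat; try apply Rabs_pos; assumption).
      assert (Rabs (IZR v) * Rabs (IZR qN1 * alpha - IZR pN1) <= INR K * / Nq)
        by (apply Rmult_le_compat; try apply Rabs_pos; assumption).
      unfold Rdiv. lra. }
    assert (Hqzb : (qz <= 2 * Z.of_nat K * qN1)%Z).
    { assert (u * qN <= Z.abs u * qN)%Z by (apply Z.mul_le_mono_nonneg_r; lia).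
      assert (Z.abs u * qN <= Z.of_nat K * qN1)%Z by (apply Z.mul_le_mono_nonneg; lia).
      assert (v * qN1 <= Z.abs v * qN1)%Z by (apply Z.mul_le_mono_nonneg_r; lia).
      assert (Z.abs v * qN1 <= Z.of_nat K * qN1)%Z by (apply Z.mul_le_mono_nonneg; lia).
      unfold qz. lia. }
    assert (Hqzr : 0 <= IZR qz <= 2 * INR K * Nq).
    { split; [apply IZR_le; lia|]. rewrite HKr, <- EqN1. 
      replace 2 with (IZR 2) by reflexivity. rewrite <- !mult_IZR. apply IZR_le. exact Hqzb. }
    assert (Hcne : cl * alpha + dd <> 0) by (intro H0; unfold cd in Hcd; fold cl dd in Hcd; rewrite H0, Rabs_R0 in Hcd; lra).
    set (beta := (al * alpha + bl) / (cl * alpha + dd)).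
    assert (Hbeta : IZR zD * beta = IZR ze * qR * alpha + IZR zF - IZR ze * cl * dl / (cl * alpha + dd)).
    { unfold beta. apply Rmult_eq_reg_r with (cl * alpha + dd); [|exact Hcne].
      unfold Rdiv. rewrite Rmult_minus_distr_r.
      replace (IZR zD * ((al * alpha + bl) * / (cl * alpha + dd)) * (cl * alpha + dd))
        with (IZR zD * (al * alpha + bl)) by (field; exact Hcne).
      replace (IZR ze * cl * dl * / (cl * alpha + dd) * (cl * alpha + dd)) with (IZR ze * cl * dl)
        by (field; exact Hcne).
      lra. }
    assert (Hbm : IZR zD * (IZR qz * beta - IZR m)
                  = IZR ze * qR * eta - IZR ze * cl * IZR qz * dl / (cl * alpha + dd)).
    { replace (IZR zD * (IZR qz * beta - IZR m)) with (IZR qz * (IZR zD * beta) - IZR zD * IZR m) by ring.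
      rewrite Hbeta, HXr. unfold eta. unfold Rdiv. ring. }
    assert (HDpos : 0 < Rabs (IZR zD)) by (rewrite <- HADr; apply IZR_lt; exact HAD).
    assert (Hbm2 : Rabs (IZR qz * beta - IZR m) <= (E * qR * Rabs eta + E * Rabs cl * IZR qz * Rabs dl / cd) / Rabs (IZR zD)).
    { apply Rmult_le_reg_l with (Rabs (IZR zD)); [exact HDpos|].
      replace (Rabs (IZR zD) * ((E * qR * Rabs eta + E * Rabs cl * IZR qz * Rabs dl / cd) / Rabs (IZR zD)))
        with (E * qR * Rabs eta + E * Rabs cl * IZR qz * Rabs dl / cd) by (field; lra).
      rewrite <- Rabs_mult, Hbm. eapply Rle_trans; [apply Rabs_triang|]. rewrite Rabs_Ropp.
      rewrite HE. unfold Rdiv. rewrite !Rabs_mult. rewrite Rabs_inv.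
      rewrite (Rabs_right qR) by lra. rewrite (Rabs_right (IZR qz)) by lra.
      unfold cd. fold cl dd. lra. }
    apply (final_bound (INR K) (Rabs (IZR zD)) c' E (Rabs cl) cd qR qr qs Nq dl (IZR qz) eta).
    + apply pos_INR.
    + exact HDpos.
    + rewrite <- HADr, HKr, <- mult_IZR. apply IZR_le. rewrite HKz. exact Hs1.
    + exact HDc.
    + rewrite HE; apply Rabs_pos.
    + apply Rabs_pos.
    + exact Hcd.
    + lra.
    + exact H7.
    + exact H8.
    + exact HN.
    + exact Hdl.
    + exact Hqzr.
    + exact Heta.
    + split; [apply dnint_nonneg|]. apply dnint_le.
    + split; [apply dnint_nonneg|]. eapply Rle_trans; [apply (dnint_le _ m)|]. exact Hbm2.
Qed.


Open Scope R_scope.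

Lemma ln_le' x y : 0 < x -> x <= y -> ln x <= ln y.
Proof. intros Hx [H|H]; [left; apply ln_increasing; lra| subst; lra]. Qed.

Lemma nat_above y : exists n : nat, y < INR n.
Proof.
  destruct (archimed y) as [H1 _]. destruct (Z_lt_le_dec (up y) 0) as [l|l].
  - exists 0%nat. apply IZR_lt in l. simpl. lra.
  - exists (Z.to_nat (up y)). rewrite INR_IZR_INZ, Z2Nat.id by lia. lra.
Qed.

Lemma len_grow (U : nat -> list nat) :
  (forall k, (1 <= k)%nat -> (length (U k) < length (U (S k)))%nat) ->
  forall k, (1 <= k)%nat -> (k - 1 <= length (U k))%nat.
Proof.
  intros H k Hk. induction Hk as [|k Hk IH]; [lia|]. specialize (H k Hk). lia.
Qed.

Section Growth.
Variable a : nat -> nat.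
Hypothesis Ha : forall k, (1 <= a k)%nat.
Variable alpha kappa : R.
Hypothesis Hlim : is_lim_seq (xc a) alpha.
Hypothesis Hk : 0 < kappa.
Hypothesis Hbad : forall q : nat, (1 <= q)%nat -> kappa <= INR q * dnint (INR q * alpha).

Lemma q_step n : kappa * INR (conv_q a (S n)) <= INR (conv_q a n).
Proof.
  assert (Hq : (1 <= conv_q a n)%nat) by apply (cq_pos a Ha).
  pose proof (Hbad _ Hq) as Hb.
  pose proof (dnint_le (INR (conv_q a n) * alpha) (Z.of_nat (conv_p a n))) as Hd.
  rewrite <- INR_IZR_INZ in Hd.
  pose proof (approx a Ha alpha Hlim n) as Hap.
  pose proof (INR_cq_pos a Ha n). pose proof (INR_cq_pos a Ha (S n)).
  assert (kappa <= INR (conv_q a n) * / INR (conv_q a (S n))).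
  { eapply Rle_trans; [exact Hb|]. apply Rmult_le_compat_l; lra. }
  apply Rmult_le_compat_r with (r := INR (conv_q a (S n))) in H1; [|lra].
  rewrite Rmult_assoc, Rinv_l, Rmult_1_r in H1 by lra. exact H1.
Qed.

Lemma kappa_le1 : kappa <= 1.
Proof.
  pose proof (q_step 0). rewrite cq0 in H. simpl INR in H.
  pose proof (INR_cq_pos a Ha 1). assert (1 <= INR (conv_q a 1)) by (apply (le_INR 1), cq_pos, Ha).
  nra.
Qed.

Lemma q_upper l : ln (INR (conv_q a l)) <= INR l * ln (/ kappa).
Proof.
  induction l as [|l IH].
  - rewrite cq0. simpl. rewrite ln_1. lra.
  - pose proof (q_step l). pose proof (INR_cq_pos a Ha l). pose proof (INR_cq_pos a Ha (S l)).
    assert (INR (conv_q a (S l)) <= INR (conv_q a l) * / kappa).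
    { apply Rmult_le_reg_l with kappa; [lra|]. replace (kappa * (INR (conv_q a l) * / kappa)) with (INR (conv_q a l)) by (field; lra). lra. }
    apply ln_le' in H2; [|lra]. rewrite ln_mult in H2 by (try apply Rinv_0_lt_compat; lra).
    rewrite S_INR. lra.
Qed.

Lemma q_lower4 l : (2 <= l)%nat -> (2 ^ l <= conv_q a l ^ 4)%nat.
Proof.
  intros Hl. induction l as [l IH] using lt_wf_ind.
  destruct l as [|[|[|[|l]]]]; try lia.
  - pose proof (cq_ge_n a Ha 2). simpl. nia.
  - pose proof (cq_ge_n a Ha 3). simpl. nia.
  - assert (H2 : (2 ^ S (S l) <= conv_q a (S (S l)) ^ 4)%nat) by (apply IH; lia).
    pose proof (cq_ge2 a Ha (S (S l))).
    replace (2 ^ S (S (S (S l))))%nat with (4 * 2 ^ S (S l))%nat by (simpl; lia).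
    assert (16 * conv_q a (S (S l)) ^ 4 <= conv_q a (S (S (S (S l)))) ^ 4)%nat.
    { replace (16 * conv_q a (S (S l)) ^ 4)%nat with ((2 * conv_q a (S (S l))) ^ 4)%nat by (simpl; ring).
      apply Nat.pow_le_mono_l. exact H. }
    lia.
Qed.

Lemma q_lower l : (2 <= l)%nat -> INR l * ln 2 <= 4 * ln (INR (conv_q a l)).
Proof.
  intros Hl. pose proof (q_lower4 l Hl) as H. apply le_INR in H. rewrite !pow_INR in H.
  apply ln_le' in H; [|apply pow_lt; simpl; lra].
  assert (E2 : INR 2 = 2) by (simpl; lra). assert (E4 : INR 4 = 4) by (simpl; lra).
  rewrite !ln_pow in H; try (apply INR_cq_pos; exact Ha); try (simpl; lra).
  rewrite E2, E4 in H. lra.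
Qed.
End Growth.


Open Scope R_scope.

Lemma exp_le' x y : x <= y -> exp x <= exp y.
Proof. intros [H|H]; [left; apply exp_increasing; exact H|subst; lra]. Qed.

Lemma growth (a : nat -> nat) (U : nat -> list nat) (x : Q) (alpha kappa : R) :
  (forall k, (1 <= a k)%nat) -> is_lim_seq (xc a) alpha -> 0 < kappa ->
  (forall q : nat, (1 <= q)%nat -> kappa <= INR q * dnint (INR q * alpha)) ->
  (0 < x)%Q ->
  (forall k, (1 <= k)%nat -> (length (U k) < length (U (S k)))%nat) ->
  (1 <= Q2R x \/
   Q2R x > / 2 *
     (ln (real (LimSup_seq (fun l => Rpower (INR (conv_q a l)) (/ INR l))))
      / ln (real (LimInf_seq (fun l => Rpower (INR (conv_q a l)) (/ INR l)))))) ->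
  forall Big, 1 <= Big -> exists k, (2 <= k)%nat /\
    Big * INR (conv_q a (length (U k))) <= INR (conv_q a (length (word_pow (U k) x))) ^ 2.
Proof.
  intros Ha Hlim Hk Hbad Hx Hlen Hcase Big HBig.
  assert (Hxr : 0 < Q2R x).
  { apply Qlt_Rlt in Hx. replace (Q2R 0) with 0 in Hx by (unfold Q2R; simpl; ring). exact Hx. }
  assert (Hr : forall k, (1 <= k)%nat -> (k - 1 <= length (U k))%nat) by (apply len_grow; exact Hlen).
  assert (Hs : forall k, Q2R x * INR (length (U k)) <= INR (length (word_pow (U k) x)))
    by (intros; apply wp_len; exact Hx).
  destruct Hcase as [H1|H2].
  - destruct (nat_above Big) as [n0 Hn0].
    exists (n0 + 2)%nat. split; [lia|].
    set (r := length (U (n0 + 2)%nat)). set (s := length (word_pow (U (n0+2)%nat) x)).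
    assert (Hrn : (n0 + 1 <= r)%nat) by (pose proof (Hr (n0+2)%nat); unfold r; lia).
    assert (Hsr : (r <= s)%nat).
    { apply INR_le. pose proof (Hs (n0+2)%nat). fold r s in H. pose proof (pos_INR r). nra. }
    assert (Hqq : INR (conv_q a r) <= INR (conv_q a s)) by (apply le_INR, cq_mono_le; auto).
    assert (Hqr : INR (n0+1) <= INR (conv_q a r)) by (apply le_INR; pose proof (cq_ge_n a Ha r); lia).
    rewrite plus_INR in Hqr. simpl INR in Hqr.
    simpl. nra.
  - set (u := fun l => Rpower (INR (conv_q a l)) (/ INR l)) in H2.
    assert (Hln : forall l, (1 <= l)%nat -> ln (u l) = ln (INR (conv_q a l)) / INR l).
    { intros l Hl. unfold u. rewrite ln_Rpower. unfold Rdiv. ring. }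
    assert (Hlpos : forall l, (1 <= l)%nat -> 0 < INR l) by (intros; apply lt_0_INR; lia).
    assert (Hupos : forall l, 0 < u l) by (intros; unfold u, Rpower; apply exp_pos).
    assert (Hq1 : forall l, 0 <= ln (INR (conv_q a l))).
    { intros l. rewrite <- ln_1. apply ln_le'; [lra|]. apply (le_INR 1), cq_pos, Ha. }
    assert (Hup : forall l, (1 <= l)%nat -> u l <= / kappa).
    { intros l Hl. unfold u, Rpower. rewrite <- (exp_ln (/ kappa)) by (apply Rinv_0_lt_compat; lra).
      apply exp_le'. pose proof (q_upper a Ha alpha kappa Hlim Hk Hbad l). pose proof (Hlpos l Hl).
      apply Rmult_le_reg_l with (INR l); [lra|]. rewrite <- Rmult_assoc, Rinv_r, Rmult_1_l by lra. exact H. }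
    assert (Hlo1 : forall l, (1 <= l)%nat -> 1 <= u l).
    { intros l Hl. unfold u, Rpower. rewrite <- exp_0. apply exp_le'.
      apply Rmult_le_pos; [apply Rlt_le, Rinv_0_lt_compat, Hlpos, Hl|apply Hq1]. }
    set (theta := exp (ln 2 / 4)).
    assert (Hln2 : 0 < ln 2) by (rewrite <- ln_1; apply ln_increasing; lra).
    assert (Htheta : 1 < theta) by (unfold theta; rewrite <- exp_0; apply exp_increasing; lra).
    assert (Hlo2 : forall l, (2 <= l)%nat -> theta <= u l).
    { intros l Hl. unfold u, Rpower, theta. apply exp_le'. pose proof (q_lower a Ha l Hl).
      assert (0 < INR l) by (apply Hlpos; lia).
      apply Rmult_le_reg_l with (INR l); [lra|]. rewrite <- Rmult_assoc, Rinv_r, Rmult_1_l by lra. lra. }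
    destruct (ex_LimSup_seq u) as [LS HLS].
    destruct (ex_LimInf_seq u) as [LI HLI].
    assert (ELS : LimSup_seq u = LS) by (apply is_LimSup_seq_unique; exact HLS).
    assert (ELI : LimInf_seq u = LI) by (apply is_LimInf_seq_unique; exact HLI).
    rewrite ELS, ELI in H2.
    destruct LS as [Ms| |].
    2:{ exfalso. destruct (HLS (/ kappa) 1%nat) as [n [Hn1 Hn2]]. pose proof (Hup n Hn1). lra. }
    2:{ exfalso. destruct (HLS 1) as [N HN]. pose proof (HN (N+1)%nat ltac:(lia)). pose proof (Hlo1 (N+1)%nat ltac:(lia)). lra. }
    destruct LI as [ms| |].
    2:{ exfalso. destruct (HLI (/ kappa)) as [N HN]. pose proof (HN (N+1)%nat ltac:(lia)). pose proof (Hup (N+1)%nat ltac:(lia)). lra. }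
    2:{ exfalso. destruct (HLI 1 1%nat) as [n [Hn1 Hn2]]. pose proof (Hlo1 n Hn1). lra. }
    simpl in H2.
    assert (HMs : 1 <= Ms).
    { destruct (Rle_dec 1 Ms) as [h|h]; [exact h|exfalso].
      assert (Hep : 0 < 1 - Ms) by lra.
      destruct (proj2 (HLS (mkposreal _ Hep))) as [N HN]. simpl in HN.
      pose proof (HN (N+1)%nat ltac:(lia)). pose proof (Hlo1 (N+1)%nat ltac:(lia)). lra. }
    assert (Hms : theta <= ms).
    { destruct (Rle_dec theta ms) as [h|h]; [exact h|exfalso].
      assert (Hep : 0 < theta - ms) by lra.
      destruct (proj1 (HLI (mkposreal _ Hep)) 2%nat) as [n [Hn1 Hn2]]. simpl in Hn2.
      pose proof (Hlo2 n Hn1). lra. }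
    assert (Hlms : 0 < ln ms) by (rewrite <- ln_1; apply ln_increasing; lra).
    assert (HlMs : 0 <= ln Ms) by (rewrite <- ln_1; apply ln_le'; lra).
    set (X := Q2R x) in *.
    set (Gp := 2 * X * ln ms - ln Ms).
    assert (HGp : 0 < Gp).
    { unfold Gp. assert (X * ln ms > / 2 * (ln Ms / ln ms) * ln ms) by (apply Rmult_gt_compat_r; lra).
      replace (/ 2 * (ln Ms / ln ms) * ln ms) with (/2 * ln Ms) in H by (field; lra). lra. }
    set (g := Gp / (2 * (2 * X + 1))).
    assert (Hg : 0 < g) by (unfold g; apply Rdiv_lt_0_compat; lra).
    assert (Hg2 : g * (2 * (2 * X + 1)) = Gp) by (unfold g; field; lra).
    set (lam := exp g).
    assert (Hlam : 1 < lam) by (unfold lam; rewrite <- exp_0; apply exp_increasing; lra).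
    assert (Hep1 : 0 < Ms * (lam - 1)) by nra.
    destruct (proj2 (HLS (mkposreal _ Hep1))) as [N1 HN1]. simpl in HN1.
    assert (Hep2 : 0 < ms * (1 - / lam)).
    { assert (/ lam < 1) by (rewrite <- Rinv_1; apply Rinv_lt_contravar; lra). nra. }
    destruct (proj2 (HLI (mkposreal _ Hep2))) as [N2 HN2]. simpl in HN2.
    set (L1 := ln Ms + g). set (L2 := ln ms - g).
    assert (HL1 : forall n, (N1 <= n)%nat -> (1 <= n)%nat -> ln (INR (conv_q a n)) < INR n * L1).
    { intros n Hn Hn'. pose proof (HN1 n Hn).
      replace (Ms + Ms * (lam - 1)) with (Ms * lam) in H by ring.
      apply ln_increasing in H; [|apply Hupos].
      rewrite ln_mult in H by lra. unfold lam in H. rewrite ln_exp in H.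
      rewrite Hln in H by exact Hn'. pose proof (Hlpos n Hn').
      unfold L1. apply Rmult_lt_reg_r with (/ INR n); [apply Rinv_0_lt_compat; lra|].
      replace (INR n * (ln Ms + g) * / INR n) with (ln Ms + g) by (field; lra). exact H. }
    assert (HL2 : forall n, (N2 <= n)%nat -> (1 <= n)%nat -> INR n * L2 < ln (INR (conv_q a n))).
    { intros n Hn Hn'. pose proof (HN2 n Hn).
      replace (ms - ms * (1 - / lam)) with (ms * / lam) in H by ring.
      apply ln_increasing in H; [|apply Rmult_lt_0_compat; [lra|apply Rinv_0_lt_compat; lra]].
      rewrite ln_mult in H by (try apply Rinv_0_lt_compat; lra). rewrite ln_Rinv in H by lra.
      unfold lam in H. rewrite ln_exp in H.
      rewrite Hln in H by exact Hn'. pose proof (Hlpos n Hn').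
      unfold L2. apply Rmult_lt_reg_r with (/ INR n); [apply Rinv_0_lt_compat; lra|].
      replace (INR n * (ln ms - g) * / INR n) with (ln ms + - g) by (field; lra). exact H. }
    assert (HL2pos : 0 < L2).
    { unfold L2. assert (Gp < 2 * (2 * X + 1) * ln ms) by (unfold Gp; nra). nra. }
    assert (Hkey : 2 * X * L2 - L1 = Gp / 2).
    { unfold L1, L2. replace (Gp / 2) with (Gp - (2 * X + 1) * g) by (rewrite <- Hg2; field).
      unfold Gp. ring. }
    destruct (nat_above (INR N1 + INR N2 / X + 2 * ln Big / Gp + 1)) as [n0 Hn0].
    assert (Hdiv1 : 0 <= INR N2 / X) by (apply Rdiv_le_0_compat; [apply pos_INR|lra]).
    assert (HlnB : 0 <= ln Big) by (rewrite <- ln_1; apply ln_le'; lra).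
    assert (Hdiv2 : 0 <= 2 * ln Big / Gp) by (apply Rdiv_le_0_compat; lra).
    assert (HN1pos : 0 <= INR N1) by apply pos_INR.
    exists (n0 + 2)%nat. split; [lia|].
    set (r := length (U (n0 + 2)%nat)). set (s := length (word_pow (U (n0+2)%nat) x)).
    assert (Hrn : (n0 + 1 <= r)%nat) by (pose proof (Hr (n0+2)%nat); unfold r; lia).
    apply le_INR in Hrn. rewrite plus_INR in Hrn. simpl INR in Hrn.
    assert (Hsx : X * INR r <= INR s) by apply Hs.
    assert (Hr1 : (1 <= r)%nat) by (apply INR_le; simpl; lra).
    assert (HrN1 : (N1 <= r)%nat) by (apply INR_le; lra).
    assert (HsN2 : (N2 <= s)%nat).
    { apply INR_le. assert (INR N2 / X * X = INR N2) by (field; lra).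
      assert (INR N2 / X <= INR r) by lra. nra. }
    assert (Hs1 : (1 <= s)%nat).
    { assert (INR 0 < INR s) by (simpl; nra). apply INR_lt in H. lia. }
    pose proof (HL1 r HrN1 Hr1) as Hqr. pose proof (HL2 s HsN2 Hs1) as Hqs.
    assert (Hbig : ln Big <= INR r * (Gp / 2)).
    { assert (2 * ln Big / Gp * Gp = 2 * ln Big) by (field; lra).
      assert (2 * ln Big / Gp <= INR r) by lra. nra. }
    assert (HsL : X * INR r * L2 <= INR s * L2) by (apply Rmult_le_compat_r; lra).
    assert (Hfin : ln Big + ln (INR (conv_q a r)) <= 2 * ln (INR (conv_q a s))).
    { assert (INR r * (Gp / 2) = 2 * X * INR r * L2 - INR r * L1) by (rewrite <- Hkey; ring). nra. }
    pose proof (INR_cq_pos a Ha r). pose proof (INR_cq_pos a Ha s).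
    rewrite <- ln_mult in Hfin by lra.
    replace (2 * ln (INR (conv_q a s))) with (ln (INR (conv_q a s) ^ 2)) in Hfin
      by (rewrite ln_pow by lra; simpl; ring).
    destruct Hfin as [Hf|Hf].
    + left. apply ln_lt_inv; [nra|apply pow_lt; lra|exact Hf].
    + right. apply ln_inv; [nra|apply pow_lt; lra|exact Hf].
Qed.


Open Scope R_scope.

Theorem theorem4 (alpha : R) (a : nat -> nat) (x : Q) (U : nat -> list nat) :
  is_cf_expansion alpha a ->
  Bad alpha ->
  (0 < x)%Q ->
  (forall k, (1 <= k)%nat -> begins_with a (U k ++ word_pow (U k) x)) ->
  (forall k, (1 <= k)%nat -> (length (U k) < length (U (S k)))%nat) ->
  (1 <= Q2R x \/
   Q2R x > / 2 *
     (ln (real (LimSup_seq (fun l => Rpower (INR (conv_q a l)) (/ INR l))))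
      / ln (real (LimInf_seq (fun l => Rpower (INR (conv_q a l)) (/ INR l)))))) ->
  forall beta : R, homography_equiv alpha beta ->
  forall eps : R, 0 < eps ->
  exists q : nat, (1 <= q)%nat /\
    INR q * dnint (INR q * alpha) * dnint (INR q * beta) < eps.
Proof.
  intros [Ha Hlim] [kappa [Hk Hbad]] Hx Hbeg Hlen Hcase beta [za [zb [zc [zd [He Hbeta]]]]] eps Heps.
  subst beta.
  assert (Hlim' : is_lim_seq (xc a) alpha) by exact Hlim.
  assert (Hcd := cd_pos alpha kappa za zb zc zd Hk Hbad He).
  set (cd := Rabs (IZR zc * alpha + IZR zd)) in *.
  set (E := Rabs (IZR (za*zd - zb*zc))).
  set (c' := IZR zd * IZR zd + Rabs (IZR zc * IZR zd) + IZR zc * IZR zc).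
  set (Cst := 64 * c' * (E * (1 + 16 * Rabs (IZR zc) / cd)) ^ 2).
  assert (Hc' : 0 <= c') by (unfold c'; pose proof (Rabs_pos (IZR zc * IZR zd)); nra).
  assert (HE : 0 <= E) by apply Rabs_pos.
  assert (HCst : 0 <= Cst) by (unfold Cst; apply Rmult_le_pos; [lra|apply pow2_ge_0]).
  assert (Heps2 : 0 < eps * eps) by nra.
  set (T1 := Cst / (eps * eps)).
  assert (HT1 : 0 <= T1) by (apply Rdiv_le_0_compat; lra).
  set (T2 := 8 * E * E * Rabs (IZR zc) / (kappa * cd)).
  assert (HT2 : 0 <= T2) by (apply Rdiv_le_0_compat; [pose proof (Rabs_pos (IZR zc)); apply Rmult_le_pos; nra|nra]).
  set (Big := 1 + T1 + T2 + c' * c').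
  assert (HBig : 1 <= Big) by (unfold Big; nra).
  destruct (growth a U x alpha kappa Ha Hlim' Hk Hbad Hx Hlen Hcase Big HBig) as [k [Hk2 Hgr]].
  set (r := length (U k)) in *. set (s := length (word_pow (U k) x)) in *.
  assert (Hr1 : (1 <= r)%nat) by (pose proof (len_grow U Hlen k ltac:(lia)); unfold r; lia).
  assert (Hs1 : (1 <= s)%nat).
  { pose proof (wp_len (U k) x Hx). fold r s in H.
    assert (Hxr : 0 < Q2R x).
    { apply Qlt_Rlt in Hx. replace (Q2R 0) with 0 in Hx by (unfold Q2R; simpl; ring). exact Hx. }
    assert (1 <= INR r) by (apply (le_INR 1); exact Hr1).
    assert (INR 0 < INR s) by (simpl; nra). apply INR_lt in H1. lia. }
  assert (Hsh : forall j, (j < s)%nat -> a (S (r - 1) + j)%nat = a j).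
  { intros j Hj. replace (S (r - 1)) with r by lia. apply (rep_shift a (U k) x (Hbeg k ltac:(lia))). exact Hj. }
  pose proof (main_step a alpha kappa za zb zc zd (r - 1) s Ha Hlim' Hk Hbad He Hs1 Hsh) as Hms.
  replace (S (r - 1)) with r in Hms by lia.
  cbv zeta in Hms. fold cd E c' in Hms.
  set (qr := INR (conv_q a r)) in *. set (qs := INR (conv_q a s)) in *.
  assert (Hqr : 1 <= qr) by (apply (le_INR 1), cq_pos, Ha).
  assert (Hqs : 1 <= qs) by (apply (le_INR 1), cq_pos, Ha).
  assert (Hqs2 : Big <= qs * qs) by (simpl in Hgr; nra).
  assert (Hgr' : Big * qr <= qs * qs) by (replace (qs * qs) with (qs ^ 2) by ring; exact Hgr).
  destruct Hms as [H1|[H1|[q [Hq H1]]]].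
  - exfalso.
    assert (T2 * (kappa * cd) = 8 * E * E * Rabs (IZR zc)) by (unfold T2; field; lra).
    assert (T2 < qs * qs) by (unfold Big in Hqs2; nra).
    assert (0 < kappa * cd) by nra.
    assert (T2 * (kappa * cd) < qs * qs * (kappa * cd)) by (apply Rmult_lt_compat_r; lra).
    nra.
  - exfalso. assert (c' * c' < qs * qs) by (unfold Big in Hqs2; nra). nra.
  - exists q. split; [exact Hq|].
    set (P := INR q * dnint (INR q * alpha) * dnint (INR q * ((IZR za * alpha + IZR zb) / (IZR zc * alpha + IZR zd)))) in *.
    assert (HP0 : 0 <= P).
    { unfold P. apply Rmult_le_pos; [apply Rmult_le_pos|]; try apply dnint_nonneg; apply pos_INR. }
    assert (HB : Cst * qr / (qs * qs) < eps * eps).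
    { assert (T1 < Big) by (unfold Big; nra).
      assert (T1 * (eps * eps) = Cst) by (unfold T1; field; lra).
      assert (Cst * qr / (qs * qs) <= Cst / Big).
      { unfold Rdiv. rewrite Rmult_assoc. apply Rmult_le_compat_l; [lra|].
        apply Rmult_le_reg_l with (qs * qs * Big); [nra|].
        replace (qs * qs * Big * (qr * / (qs * qs))) with (Big * qr) by (field; nra).
        replace (qs * qs * Big * / Big) with (qs * qs) by (field; nra). exact Hgr'. }
      assert (Cst / Big * Big = Cst) by (field; lra).
      assert (T1 * (eps * eps) < Big * (eps * eps)) by (apply Rmult_lt_compat_r; lra).
      assert (Cst / Big < eps * eps).
      { apply Rmult_lt_reg_r with Big; [lra|]. lra. }
      lra. }
    fold Cst in H1.
    assert (HP2 : P * P < eps * eps) by (replace (P * P) with (P ^ 2) by ring; lra).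
    destruct (Rlt_le_dec P eps) as [h|h]; [exact h|]. nra.
Qed.
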